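(* Let $m\ge 3$, $n=2m$, and let $D=(X,O)$ be a marginally coupled QS design with $n$ rows. Suppose $d_H(O)\ge m-2$ and the number of unordered pairs of distinct rows of $O$ at Hamming distance exactly $m-2$ is smaller than $m^2/2$. Then $$d_1(X)\le\left\lfloor\frac{(m+1)m}{3}\right\rfloor,\qquad d_2(X)\le\sqrt{\left\lfloor\frac{m^2(m+1)}{6}\right\rfloor}.$$
   Context: $X$ is a $2m\times m$ LHD (each column a permutation of $\{1,\ldots,2m\}$), $O$ is a $2m\times m$ sequence design (each row a permutation of $\{1,\ldots,m\}$). $D=(X,O)$ is marginally coupled if for every column $u$ of $O$, every component $c\in\{1,\ldots,m\}$ and every column $j$ of $X$, the multiset $\{\lfloor (X_{rj}-1)/m\rfloor: O_{ru}=c\}$ equals $\{0,1\}$. $d_q(X)=\min_{i<j}\{\sum_k|x_{ik}-x_{jk}|^q\}^{1/q}$; $d_H(O)$ is the minimum over distinct row pairs of the number of positions where the rows differ. *)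

(* Defs.v *)
From HB Require Import structures.
From mathcomp Require Import all_boot all_order all_algebra.
Set Implicit Arguments. Unset Strict Implicit. Unset Printing Implicit Defensive.
Import Order.TTheory GRing.Theory Num.Theory.

(* Designs are functions row -> column -> nat, entries taken 1-based as in the paper. *)
Definition design (nr nc : nat) := 'I_nr -> 'I_nc -> nat.

Definition is_LHD nr nc (X : design nr nc) : Prop :=
  forall j : 'I_nc, (forall i, 1 <= X i j <= nr) /\ injective (fun i => X i j).

Definition is_seq_design nr nc (O : design nr nc) : Prop :=
  forall i : 'I_nr, (forall j, 1 <= O i j <= nc) /\ injective (O i).

Definition marginally_coupled m (X O : design (2 * m) m) : Prop :=
  forall (u : 'I_m) (c : nat) (j : 'I_m), 1 <= c <= m ->
    perm_eq [seq (X r j).-1 %/ m | r <- enum 'I_(2 * m) & O r u == c] [:: 0; 1].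

(* Minimum of f over unordered pairs of distinct rows {i < j}; the idx is an
   upper bound of all terms, so it is the true minimum whenever nr >= 2. *)
Definition min_pairs nr (f : 'I_nr -> 'I_nr -> nat) : nat :=
  \big[minn/ \sum_(p : 'I_nr * 'I_nr) f p.1 p.2]_(p : 'I_nr * 'I_nr | p.1 < p.2) f p.1 p.2.

Definition dist1 nr nc (X : design nr nc) (i j : 'I_nr) : nat :=
  \sum_(k < nc) (absz (Posz (X i k) - Posz (X j k))%R).

Definition sqdist2 nr nc (X : design nr nc) (i j : 'I_nr) : nat :=
  \sum_(k < nc) ((absz (Posz (X i k) - Posz (X j k))%R)) ^ 2.

Definition d1 nr nc (X : design nr nc) : nat := min_pairs (dist1 X).

(* d_2(X) = min_{i<j} sqrt(sum_k |x_ik - x_jk|^2) = sqrt of the minimum (sqrt monotone). *)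
Definition d2 (R : rcfType) nr nc (X : design nr nc) : R :=
  Num.sqrt (min_pairs (fun i j => sqdist2 X i j))%:R.

Definition hamming nr nc (O : design nr nc) (i j : 'I_nr) : nat :=
  #|[set k : 'I_nc | O i k != O j k]|.

Definition dH nr nc (O : design nr nc) : nat := min_pairs (hamming O).

Definition num_pairs_at nr nc (O : design nr nc) (d : nat) : nat :=
  #|[set p : 'I_nr * 'I_nr | (p.1 < p.2) && (hamming O p.1 p.2 == d)]|.

(* Main.v *)
Require Import Defs.

From HB Require Import structures.
From mathcomp Require Import all_boot all_order all_algebra.
From mathcomp Require Import zify.
Import Order.TTheory GRing.Theory Num.Theory.
Set Implicit Arguments. Unset Strict Implicit. Unset Printing Implicit Defensive.

Lemma cnt (T : finType) (a : pred T) : count a (enum T) = #|[set x | a x]|.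
Proof. rewrite -sum1_count big_enum_cond /= -sum1dep_card. by apply: eq_bigl => x. Qed.

Lemma sum_ind (T : finType) (P Q : pred T) :
  \sum_(s | P s) (Q s : nat) = #|[set s | P s && Q s]|.
Proof.
rewrite -sum1dep_card big_mkcondr /=; apply: eq_bigr => s _; by case: (Q s).
Qed.

Definition hh m (X : design (2 * m) m) k r := (X r k).-1 %/ m.
Definition agr m (O : design (2 * m) m) r s := #|[set u : 'I_m | O r u == O s u]|.

Lemma mcnt m (X O : design (2 * m) m) u c j v :
  marginally_coupled X O -> 1 <= c <= m ->
  #|[set r | (O r u == c) && (hh X j r == v)]| = count (pred1 v) [:: 0; 1].
Proof.
move=> Hmc Hc; have := Hmc u c j Hc; move/permP => /(_ (pred1 v)).
rewrite count_map count_filter cnt => <-; apply: eq_card => r; rewrite !inE andbC.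
by [].
Qed.

Lemma mtwo m (X O : design (2 * m) m) u c (j : 'I_m) :
  marginally_coupled X O -> 1 <= c <= m ->
  #|[set r | O r u == c]| = 2.
Proof.
move=> Hmc Hc; have := Hmc u c j Hc; move/perm_size.
by rewrite size_map size_filter cnt.
Qed.

Lemma mdiff m (X O : design (2 * m) m) u j r s :
  is_seq_design O -> marginally_coupled X O -> r != s -> O r u = O s u ->
  hh X j r != hh X j s.
Proof.
move=> HS Hmc rs Ers; apply/negP => /eqP Eh.
have Hc : 1 <= O r u <= m by case: (HS r) => H _; exact: H.
have := mcnt u j (hh X j r) Hmc Hc.
have : 2 <= #|[set r' | (O r' u == O r u) && (hh X j r' == hh X j r)]|.
  have C2 : #|[set r; s]| = 2 by rewrite cards2 rs.
  rewrite -[X in X <= _]C2; apply/subset_leq_card/subsetP => x; rewrite !inE.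
  by case/orP => /eqP ->; rewrite ?Ers ?Eh !eqxx.
move=> H1 H2; move: H1; rewrite H2 /=; case: (hh X j r) => [|[|?]] //.
Qed.

Lemma agr_sym m (O : design (2 * m) m) r s : agr O r s = agr O s r.
Proof. by apply: eq_card => u; rewrite !inE eq_sym. Qed.

Lemma agr_le m (O : design (2 * m) m) r s : agr O r s <= m.
Proof. by rewrite /agr -[X in _ <= X]card_ord max_card. Qed.

Lemma ham_agr m (O : design (2 * m) m) r s : hamming O r s = m - agr O r s.
Proof.
rewrite /hamming /agr; have H := cardsC [set u | O r u == O s u]; rewrite card_ord in H.
have -> : [set k | O r k != O s k] = ~: [set u | O r u == O s u] by apply/setP => u; rewrite !inE.
move: H; move: (#|[set u | O r u == O s u]|) (#|~: [set u | O r u == O s u]|) => a b; lia.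
Qed.

Lemma agr_sum m (X O : design (2 * m) m) r :
  0 < m -> is_seq_design O -> marginally_coupled X O ->
  \sum_(s | s != r) agr O r s = m.
Proof.
move=> m0 HS Hmc.
have E s : agr O r s = \sum_(u : 'I_m) (O r u == O s u : nat).
  by rewrite sum_ind; apply: eq_card => u; rewrite !inE.
under eq_bigr do rewrite E.
rewrite exchange_big /=.
rewrite -[X in _ = X]card_ord -sum1_card; apply: eq_bigr => u _.
rewrite sum_ind.
have Hc : 1 <= O r u <= m by case: (HS r) => H _; exact: H.
have := mtwo u (Ordinal m0) Hmc Hc; rewrite (cardsD1 r) inE eqxx /= => H2.
have -> : #|[set s | (s != r) && (O r u == O s u)]| = #|[set s | O s u == O r u] :\ r|.
  by apply: eq_card => s; rewrite !inE [O r u == _]eq_sym.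
by move: H2; move: (#|_ :\ r|) => k; lia.
Qed.

Lemma bigminn_le (I : finType) (P : pred I) (F : I -> nat) j x :
  P j -> \big[minn/x]_(i | P i) F i <= F j.
Proof. move=> Pj. have : j \in index_enum I := mem_index_enum j.
elim: (index_enum I) => [//|a s IH]; rewrite big_cons inE => /orP[/eqP <-|/IH H].
  by rewrite Pj geq_minl.
by case: (P a) => //; rewrite geq_min H orbT.
Qed.

Lemma min_pairs_le nr (f : 'I_nr -> 'I_nr -> nat) r s :
  (forall a b, f a b = f b a) -> r != s -> min_pairs f <= f r s.
Proof.
move=> fsym rs; rewrite /min_pairs.
case: (ltngtP r s) => rsl.
- exact: (bigminn_le (fun p : 'I_nr * 'I_nr => f p.1 p.2) _ (j := (r, s))).
- by rewrite fsym; exact: (bigminn_le (fun p : 'I_nr * 'I_nr => f p.1 p.2) _ (j := (s, r))).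
- by move: rs; rewrite (val_inj rsl) eqxx.
Qed.



Definition dd (i j : nat) : nat := absz (Posz i - Posz j)%R.

Lemma ddSS i j : dd i.+1 j.+1 = dd i j. Proof. rewrite /dd; lia. Qed.
Lemma dd0S j : dd 0 j.+1 = j.+1. Proof. rewrite /dd; lia. Qed.
Lemma ddS0 j : dd j.+1 0 = j.+1. Proof. rewrite /dd; lia. Qed.
Lemma ddnn i : dd i i = 0. Proof. rewrite /dd; lia. Qed.

Lemma sumS m : 2 * \sum_(i < m) i.+1 = m * m.+1.
Proof. elim: m => [|m IH]; first by rewrite big_ord0.
rewrite big_ord_recr /= mulnDr IH; lia. Qed.

Lemma sumS2 m : 6 * \sum_(i < m) i.+1 ^ 2 = m * m.+1 * (2 * m + 1).
Proof. elim: m => [|m IH]; first by rewrite big_ord0.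
rewrite big_ord_recr /= mulnDr IH; lia. Qed.

Lemma dsum_rec (g : nat -> nat -> nat) m :
  \sum_(i < m.+1) \sum_(j < m.+1) g i j =
  g 0 0 + \sum_(j < m) g 0 j.+1 + \sum_(i < m) g i.+1 0 + \sum_(i < m) \sum_(j < m) g i.+1 j.+1.
Proof.
rewrite big_ord_recl /=.
rewrite (big_ord_recl m (fun j : 'I_m.+1 => g 0 j)) /=.
rewrite [X in _ + X = _](eq_bigr (fun i : 'I_m => g (bump 0 i) 0 + \sum_(j < m) g (bump 0 i) (bump 0 j))); last by move=> i _; rewrite big_ord_recl.
rewrite big_split /= !addnA.
by rewrite /bump.
Qed.

Lemma D0 m : \sum_(i < m) \sum_(j < m) ((i : nat) != (j : nat) : nat) = m * (m - 1).
Proof. elim: m => [|m IH]; first by rewrite big_ord0.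
rewrite (dsum_rec (fun i j => (i != j : nat))) /=.
under [X in _ + X = _]eq_bigr do under eq_bigr do rewrite eqSS.
rewrite IH !sum_nat_const card_ord; case: m {IH} => [|m] /=; nia. Qed.

Lemma D1 m : 3 * \sum_(i < m) \sum_(j < m) dd i j = m.+1 * m * (m - 1).
Proof. elim: m => [|m IH]; first by rewrite big_ord0.
rewrite dsum_rec ddnn.
under eq_bigr do rewrite dd0S.
under [X in _ + X + _]eq_bigr do rewrite ddS0.
under [X in _ + X]eq_bigr do under eq_bigr do rewrite ddSS.
rewrite !mulnDr IH.
have := sumS m. move: (\sum_(i < m) i.+1) => s. case: m {IH} => [|m] /=; nia. Qed.

Lemma D2 m : 6 * \sum_(i < m) \sum_(j < m) (dd i j) ^ 2 = m ^ 2 * (m ^ 2 - 1).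
Proof. elim: m => [|m IH]; first by rewrite big_ord0.
rewrite (dsum_rec (fun i j => dd i j ^ 2)) ddnn.
under eq_bigr do rewrite dd0S.
under [X in _ + X + _]eq_bigr do rewrite ddS0.
under [X in _ + X]eq_bigr do under eq_bigr do rewrite ddSS.
rewrite !mulnDr IH.
have := sumS2 m. move: (\sum_(i < m) i.+1 ^ 2) => s. case: m {IH} => [|m] /=; nia. Qed.

Lemma sum_2m (G : nat -> nat) m :
  \sum_(i < 2 * m) G i = \sum_(i < m) G i + \sum_(i < m) G (m + i).
Proof.
rewrite -(big_mkord xpredT) mul2n -addnn big_mkord big_split_ord /=.
by [].
Qed.

Lemma half_sum (g : nat -> nat -> nat) m : 0 < m ->
  \sum_(i < 2 * m) \sum_(j < 2 * m) (if i %/ m == j %/ m then g i j else 0) =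
  \sum_(i < m) \sum_(j < m) g i j + \sum_(i < m) \sum_(j < m) g (m + i) (m + j).
Proof.
move=> m0.
rewrite (sum_2m (fun i => \sum_(j < 2 * m) (if i %/ m == j %/ m then g i j else 0))).
have E1 : forall i : 'I_m, i %/ m = 0 by move=> i; rewrite divn_small.
have E2 : forall i : 'I_m, (m + i) %/ m = 1.
  by move=> i; rewrite divnDl // divnn m0 divn_small.
congr (_ + _); apply: eq_bigr => i _; rewrite (sum_2m (fun j => (if _ %/ m == j %/ m then g _ j else 0))).
  rewrite [X in _ + X = _]big1 ?addn0; last by move=> j _; rewrite E1 E2.
  by apply: eq_bigr => j _; rewrite !E1.
rewrite [X in X + _ = _]big1 ?add0n; last by move=> j _; rewrite E1 E2.
by apply: eq_bigr => j _; rewrite !E2.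
Qed.

Lemma ddDD m i j : dd (m + i) (m + j) = dd i j. Proof. rewrite /dd; lia. Qed.

Lemma C0 m : 0 < m ->
  \sum_(i < 2 * m) \sum_(j < 2 * m) (if i %/ m == j %/ m then (i != j :> nat : nat) else 0)
  = 2 * (m * (m - 1)).
Proof.
move=> m0; rewrite (half_sum (fun i j => (i != j : nat))) //.
under [X in _ + X]eq_bigr do under eq_bigr do rewrite eqn_add2l.
by rewrite D0 addnn mul2n.
Qed.

Lemma C1 m : 0 < m ->
  3 * \sum_(i < 2 * m) \sum_(j < 2 * m) (if i %/ m == j %/ m then dd i j else 0)
  = 2 * (m.+1 * m * (m - 1)).
Proof.
move=> m0; rewrite (half_sum dd) //.
under [X in _ + X]eq_bigr do under eq_bigr do rewrite ddDD.
by rewrite mulnDr D1 addnn mul2n.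
Qed.

Lemma C2 m : 0 < m ->
  3 * \sum_(i < 2 * m) \sum_(j < 2 * m) (if i %/ m == j %/ m then dd i j ^ 2 else 0)
  = m ^ 2 * (m ^ 2 - 1).
Proof.
move=> m0; rewrite (half_sum (fun i j => dd i j ^ 2)) //.
under [X in _ + X]eq_bigr do under eq_bigr do rewrite ddDD.
have := D2 m; move: (m ^ 2 * (m ^ 2 - 1)) (\sum_(i < m) \sum_(j < m) dd i j ^ 2) => K S; lia.
Qed.

Lemma key (N m : nat) (a : 'I_N -> 'I_N -> nat) (hj hk : 'I_N -> nat) :
 0 < m ->
 (forall r, hj r < 2) -> (forall r, hk r < 2) ->
 #|[set r | hj r == 1]| = m -> #|[set r | hj r == 0]| = m ->
 (forall r s, r != s -> a r s <= 2) ->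
 (forall r s, r != s -> 0 < a r s -> hj s != hj r /\ hk s != hk r) ->
 (forall r, \sum_(s | s != r) a r s = m) ->
 (forall r s, a r s = a s r) ->
 2 * #|[set p : 'I_N * 'I_N | (p.1 < p.2) && (a p.1 p.2 == 2)]| < m ^ 2 ->
 forall r s, (hj r == hk r) = (hj s == hk s).
Proof.
move=> m0 hj2 hk2 card1 card0 a2 anb asum asym Tlt.
pose f r := (hj r == hk r).
pose Nb r := [set s | (s != r) && (0 < a r s)].
pose Db r := [set s | (s != r) && (a r s == 2)].
have NbDb r : m <= #|Nb r| + #|Db r|.
  rewrite -(asum r) -!sum_ind -big_split /=.
  apply: leq_sum => s sr; have := a2 r s; rewrite eq_sym => /(_ sr).
  case: (a r s) => [|[|[|]]] //.
have DbNb r : #|Db r| <= #|Nb r|.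
  apply: subset_leq_card; apply/subsetP => s; rewrite !inE => /andP[-> /eqP ->] //.
have fNb r s : s \in Nb r -> hj s != hj r /\ f s = f r.
  rewrite inE => /andP[sr /(anb r s)]; rewrite eq_sym => /(_ sr) [H1 H2]; split => //.
  rewrite /f; move: H1 H2 (hj2 r) (hj2 s) (hk2 r) (hk2 s).
  case: (hj r) => [|[|?]] //; case: (hj s) => [|[|?]] //; case: (hk r) => [|[|?]] //; case: (hk s) => [|[|?]] //.
pose q b := #|[set s | (hj s == 1) && (f s == b)]|.
have qsum : q true + q false = m.
  rewrite -card1 -(cardID [set s | f s]) /q; congr (_ + _); apply: eq_card => s; rewrite !inE.
    by case: (f s) (hj s == 1) => [] [].
  by case: (f s) (hj s == 1) => [] [].
have Nbq r : hj r = 0 -> #|Nb r| <= q (f r).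
  move=> h0; apply: subset_leq_card; apply/subsetP => s sN.
  have [H1 H2] := fNb r s sN; rewrite inE H2 eqxx andbT.
  move: H1 (hj2 s); rewrite h0; case: (hj s) => [|[|?]] //.
have ex0 r : exists r', hj r' = 0 /\ f r' = f r.
  case E: (hj r) (hj2 r) => [|[|?]] // _; first by exists r.
  have : 0 < #|Nb r| by have := NbDb r; have := DbNb r; lia.
  case/card_gt0P => s sN; have [H1 H2] := fNb r s sN; exists s; split => //.
  move: H1 (hj2 s); rewrite E; case: (hj s) => [|[|?]] //.
move=> r s; case E: ((hj r == hk r) == (hj s == hk s)); first by move/eqP: E.
have ne : f r != f s by rewrite /f E.
have hb b : (b = f r) \/ (b = f s) -> m <= 2 * q b.
  move=> hb; have [r' [h0 fr]] : exists r', hj r' = 0 /\ f r' = b.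
    by case: hb => ->; apply: ex0.
  have := NbDb r'; have := DbNb r'; have := Nbq r' h0; rewrite fr; lia.
have qt : m <= 2 * q true by apply: hb; case: (f r) (f s) ne => [] [] //; auto.
have qf : m <= 2 * q false by apply: hb; case: (f r) (f s) ne => [] [] //; auto.
have Dbig r' : hj r' = 0 -> m <= 2 * #|Db r'|.
  move=> h0; have := NbDb r'; have := Nbq r' h0.
  case: (f r'); lia.
have : m * m <= 2 * #|[set p : 'I_N * 'I_N | (hj p.1 == 0) && (p.2 \in Db p.1)]|.
  rewrite -sum1dep_card -(pair_big_dep (fun r => hj r == 0) (fun r s => s \in Db r) (fun _ _ => 1)) /=.
  rewrite big_distrr /= -{1}card0 -sum_nat_cond_const.
  apply: leq_sum => r' /eqP h0; rewrite sum1_card.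
  exact: Dbig.
set S := [set p | _ && _].
pose phi (p : 'I_N * 'I_N) := if p.1 < p.2 then p else (p.2, p.1).
have phiinj : {in S &, injective phi}.
  move=> [x1 x2] [y1 y2]; rewrite !inE /= /phi /=.
  move=> /andP[/eqP hx /andP[x21 /eqP ax]] /andP[/eqP hy /andP[y21 /eqP ay]].
  rewrite eq_sym in x21; have [nx _] := anb _ _ x21 (ltac:(by rewrite ax)).
  case: ifP => _; case: ifP => _ => Ep.
  - exact: Ep.
  - by case: Ep => e1 e2; move: nx; rewrite hx e2 hy.
  - by case: Ep => e1 e2; move: nx; rewrite hx e1 hy.
  - by case: Ep => e1 e2; rewrite e1 e2.
have : #|S| <= #|[set p : 'I_N * 'I_N | (p.1 < p.2) && (a p.1 p.2 == 2)]|.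
  rewrite -(card_in_imset phiinj); apply/subset_leq_card/subsetP => p /imsetP [[x1 x2] xS ->].
  move: xS; rewrite !inE /phi /= => /andP[_ /andP[x21 /eqP ax]].
  case: (ltngtP (x1 : nat) x2) => xl /=.
  - by rewrite xl ax.
  - by rewrite xl asym ax.
  - by move: x21; rewrite (val_inj xl) eqxx.
lia.
Qed.

Lemma reindex1 n (x : 'I_n -> nat) (G : nat -> nat) :
  (forall r, x r < n) -> injective x -> \sum_(r < n) G (x r) = \sum_(i < n) G i.
Proof.
move=> xl xi; pose sg r := Ordinal (xl r).
have sgi : injective sg by move=> a b [] /xi.
by rewrite [RHS](reindex_inj sgi).
Qed.

Lemma reindex2 n (x : 'I_n -> nat) (G : nat -> nat -> nat) :
  (forall r, x r < n) -> injective x ->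
  \sum_(r < n) \sum_(s < n) G (x r) (x s) = \sum_(i < n) \sum_(j < n) G i j.
Proof.
move=> xl xi; rewrite -(reindex1 (fun i => \sum_(j < n) G i j) xl xi).
by apply: eq_bigr => r _; rewrite (reindex1 (G (x r)) xl xi).
Qed.

Lemma bool4 a b c d : a < 2 -> b < 2 -> c < 2 -> d < 2 ->
  (a == c) = (b == d) -> (c == d) = (a == b).
Proof. by case: a => [|[|?]] //; case: b => [|[|?]] //; case: c => [|[|?]] //; case: d => [|[|?]]. Qed.

Lemma Wsum m (X : design (2 * m) m) (j0 : 'I_m) (F : nat -> nat -> nat) :
  0 < m -> is_LHD X ->
  (forall k r s, (hh X k r == hh X k s) = (hh X j0 r == hh X j0 s)) ->
  \sum_(r < 2 * m) \sum_(s < 2 * m)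
     (if hh X j0 r == hh X j0 s then \sum_(k < m) F (X r k) (X s k) else 0)
  = \sum_(k < m) \sum_(i < 2 * m) \sum_(j < 2 * m)
     (if i %/ m == j %/ m then F i.+1 j.+1 else 0).
Proof.
move=> m0 HX same.
have xl k r : (X r k).-1 < 2 * m.
  by case: (HX k) => /(_ r) /andP[H1 H2] _; lia.
have xi k : injective (fun r => (X r k).-1).
  move=> a b E; case: (HX k) => H Hi; apply: Hi => /=.
  by move: E (H a) (H b) => /= E /andP[H1 _] /andP[H2 _]; lia.
have Xx k r : X r k = (X r k).-1.+1 by case: (HX k) => /(_ r) /andP[H1 H2] _; lia.
transitivity (\sum_(r < 2 * m) \sum_(s < 2 * m) \sum_(k < m)
   (if hh X k r == hh X k s then F (X r k) (X s k) else 0)).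
  apply: eq_bigr => r _; apply: eq_bigr => s _.
  case: ifP => E; last by rewrite big1 // => k _; rewrite same E.
  by apply: eq_bigr => k _; rewrite same E.
under eq_bigr do rewrite exchange_big.
rewrite exchange_big; apply: eq_bigr => k _.
rewrite -(reindex2 (fun i j => if i %/ m == j %/ m then F i.+1 j.+1 else 0) (xl k) (xi k)).
by apply: eq_bigr => r _; apply: eq_bigr => s _; rewrite /hh -!Xx.
Qed.


Lemma fin1 m d W : 3 <= m -> d * (2 * (m * (m - 1))) <= W -> 3 * W = m * (2 * (m.+1 * m * (m - 1))) ->
  d <= (m + 1) * m %/ 3.
Proof.
move=> m3 H1 H2; rewrite leq_divRL //.
have K0 : 0 < 2 * (m * (m - 1)) by rewrite !muln_gt0; lia.
rewrite -(leq_pmul2r K0).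
have -> : (m + 1) * m * (2 * (m * (m - 1))) = 3 * W by rewrite H2 addn1; nia.
rewrite mulnAC mulnC leq_pmul2l //.
Qed.
Lemma fin2 m d W : 3 <= m -> d * (2 * (m * (m - 1))) <= W -> 3 * W = m * (m ^ 2 * (m ^ 2 - 1)) ->
  d <= m ^ 2 * (m + 1) %/ 6.
Proof.
move=> m3 H1 H2; rewrite leq_divRL //.
have K0 : 0 < m * (m - 1) by rewrite !muln_gt0; lia.
rewrite -(leq_pmul2r K0).
have E : m ^ 2 - 1 = (m - 1) * (m + 1) by case: m m3 {H1 H2 K0} => [|p] //= _; rewrite !subn1 /=; nia.
have -> : m ^ 2 * (m + 1) * (m * (m - 1)) = 3 * W by rewrite H2 E; nia.
have -> : d * 6 * (m * (m - 1)) = 3 * (d * (2 * (m * (m - 1)))) by nia.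
by rewrite leq_pmul2l.
Qed.

Local Open Scope ring_scope.

Theorem lemma5 (R : rcfType) (m : nat) (X O : design (2 * m) m) :
  (3 <= m)%N ->
  is_LHD X -> is_seq_design O -> marginally_coupled X O ->
  (m - 2 <= dH O)%N ->
  ((num_pairs_at O (m - 2))%:R < (m ^ 2)%:R / 2 :> R) ->
  (d1 X <= (m + 1) * m %/ 3)%N /\
  d2 R X <= Num.sqrt ((m ^ 2 * (m + 1)) %/ 6)%:R.
Proof.
move=> m3 HX HS Hmc HdH HT.
have m0 : (0 < m)%N by lia.
pose j0 := Ordinal m0.
have xl k r : ((X r k).-1 < 2 * m)%N.
  by case: (HX k) => /(_ r) /andP[H1 H2] _; lia.
have xi k : injective (fun r => (X r k).-1).
  move=> a b E; case: (HX k) => H Hi; apply: Hi => /=.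
  by move: E (H a) (H b) => /= E /andP[H1 _] /andP[H2 _]; lia.
have h2 k r : (hh X k r < 2)%N by rewrite /hh ltn_divLR // mul2n -addnn -mul2n.
have hcard k b : (b < 2)%N -> #|[set r | hh X k r == b]| = m.
  move=> b2; rewrite -(setIidPl (subsetT [set r | hh X k r == b])).
  have -> : [set r | hh X k r == b] :&: [set: 'I_(2 * m)] = [set r | true && (hh X k r == b)].
    by apply/setP => r; rewrite !inE andbT.
  rewrite -sum_ind /hh (reindex1 (fun i => ((i %/ m)%N == b : nat)) (xl k) (xi k)).
  rewrite (sum_2m (fun i => ((i %/ m)%N == b : nat))).
  have E1 : forall i : 'I_m, (i %/ m = 0)%N by move=> i; rewrite divn_small.
  have E2 : forall i : 'I_m, ((m + i) %/ m = 1)%N.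
    by move=> i; rewrite divnDl // divnn m0 divn_small.
  under eq_bigr do rewrite E1.
  under [X in (_ + X)%N]eq_bigr do rewrite E2.
  rewrite !sum_nat_const card_ord.
  by case: b b2 => [|[|?]] //= _; rewrite ?muln0 ?muln1 ?addn0.
have a2 r s : r != s -> (agr O r s <= 2)%N.
  move=> rs; have := min_pairs_le (f := hamming O) (fun a b => ltac:(by rewrite !ham_agr agr_sym)) rs.
  rewrite ham_agr -/(dH O); have := agr_le O r s; lia.
have anb k r s : r != s -> (0 < agr O r s)%N -> hh X j0 s != hh X j0 r /\ hh X k s != hh X k r.
  move=> rs /card_gt0P [u]; rewrite inE => /eqP Eu.
  by split; rewrite eq_sym; apply: (mdiff _ HS Hmc rs Eu).
have Tlt : (2 * #|[set p : 'I_(2 * m) * 'I_(2 * m) | ((p.1 < p.2)%N) && (agr O p.1 p.2 == 2%N)]| < m ^ 2)%N.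
  have -> : #|[set p : 'I_(2 * m) * 'I_(2 * m) | ((p.1 < p.2)%N) && (agr O p.1 p.2 == 2%N)]| = num_pairs_at O (m - 2).
    apply: eq_card => p; rewrite !inE ham_agr; congr (_ && _).
    have := agr_le O p.1 p.2; move: (agr O p.1 p.2) => t tm.
    by apply/idP/idP => /eqP H; apply/eqP; lia.
  rewrite ltr_pdivlMr ?ltr0n // -natrM ltr_nat in HT.
  by rewrite mulnC.
have same k r s : (hh X k r == hh X k s) = (hh X j0 r == hh X j0 s).
  apply: bool4 => //.
  exact: (key m0 (h2 j0) (h2 k) (hcard j0 1%N isT) (hcard j0 0%N isT) a2 (anb k)
            (fun r => agr_sum r m0 HS Hmc) (@agr_sym _ O) Tlt r s).
have S0E : (\sum_(r < 2 * m) \sum_(s < 2 * m) (if hh X j0 r == hh X j0 s then (r != s : nat) else 0%N) = 2 * (m * (m - 1)))%N.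
  rewrite -(C0 m0) -(reindex2 (fun i j => if (i %/ m)%N == (j %/ m)%N then ((i != j) : nat) else 0%N) (xl j0) (xi j0)).
  by apply: eq_bigr => r _; apply: eq_bigr => s _; rewrite /hh (inj_eq (xi j0)).
have SW (F : nat -> nat -> nat) (f : 'I_(2 * m) -> 'I_(2 * m) -> nat) :
    (forall r s, f r s = \sum_(k < m) F (X r k) (X s k)) -> (forall r s, f r s = f s r) ->
    (min_pairs f * (2 * (m * (m - 1))) <= \sum_(k < m) \sum_(i < 2 * m) \sum_(j < 2 * m)
     (if (i %/ m)%N == (j %/ m)%N then F i.+1 j.+1 else 0%N))%N.
  move=> fE fsym; rewrite -(Wsum F m0 HX same) -S0E mulnC big_distrl /=.
  apply: leq_sum => r _; rewrite big_distrl; apply: leq_sum => s _ /=.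
  case: ifP => _ //; case: (eqVneq r s) => [->|rs] /=; first by rewrite mul0n.
  by rewrite mul1n -fE; apply: min_pairs_le.
split.
  apply: (fin1 m3 (SW dd (dist1 X) (fun r s => erefl) _)).
    by move=> a b; apply: eq_bigr => k _; rewrite /dd; lia.
  under eq_bigr do under eq_bigr do under eq_bigr do rewrite ddSS.
  by rewrite sum_nat_const card_ord mulnCA (C1 m0).
rewrite /d2 ler_sqrt ?ler0n // ler_nat.
apply: (fin2 m3 (SW (fun a b => dd a b ^ 2)%N (sqdist2 X) (fun r s => erefl) _)).
  by move=> a b; apply: eq_bigr => k _; rewrite /dd; lia.
under eq_bigr do under eq_bigr do under eq_bigr do rewrite ddSS.
by rewrite sum_nat_const card_ord mulnCA (C2 m0).
Qed.
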